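(* Assume $\xi>0$ and $K=1$. Then $\mathcal M^{N,1}_{\tilde J=0}(M_1,M_2)$ is the closure of $\mathring{\mathcal M}^{N,1}(M_1,M_2)$ in $\mathcal M^{N,1}(M_1,M_2)$.
   Context: Fix integers $N,M_1,M_2\ge0$ and $\xi>0$. $\mathcal M^{N,1}(M_1,M_2)$ is the space of tuples $(X,Y,I,J,\tilde X,\tilde Y,\tilde I,\tilde J,S)$ with $X,Y\in\mathrm{End}(\mathbb C^{M_1})$, $I\in\mathrm{Hom}(\mathbb C^N,\mathbb C^{M_1})$, $J\in\mathrm{Hom}(\mathbb C^{M_1},\mathbb C^N)$, $\tilde X,\tilde Y\in\mathrm{End}(\mathbb C^{M_2})$, $\tilde I\in\mathrm{Hom}(\mathbb C,\mathbb C^{M_2})$, $\tilde J\in\mathrm{Hom}(\mathbb C^{M_2},\mathbb C)$, $S\in\mathrm{Hom}(\mathbb C^{M_1},\mathbb C^{M_2})$ satisfying $[X,Y]+IJ=0$, $[\tilde X,\tilde Y]+\tilde I\tilde J=0$ and stability $\mathbb C\langle X,Y\rangle\mathrm{Im}(I)=\mathbb C^{M_1}$, $\mathbb C\langle\tilde X,\tilde Y\rangle(\mathrm{Im}\tilde I+\mathrm{Im}S)=\mathbb C^{M_2}$, modulo $GL_{M_1}\times GL_{M_2}$ acting by $(g,h)$: $X\mapsto gXg^{-1}$, $Y\mapsto gYg^{-1}$, $I\mapsto gI$, $J\mapsto Jg^{-1}$, similarly for tilded maps with $h$, $S\mapsto hSg^{-1}$. $\mathring{\mathcal M}^{N,1}(M_1,M_2)$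 is the open subvariety defined by $\mathbb C\langle\tilde X,\tilde Y\rangle\mathrm{Im}(\tilde I)=\mathbb C^{M_2}$, and $\mathcal M^{N,1}_{\tilde J=0}(M_1,M_2)$ is the closed subvariety defined by $\tilde J=0$. *)

(* Defs.v *)
From HB Require Import structures.
From mathcomp Require Import all_boot all_algebra complex.
From mathcomp Require Import reals.
Set Implicit Arguments. Unset Strict Implicit. Unset Printing Implicit Defensive.
Import GRing.Theory.
Local Open Scope ring_scope.

Section Quiver.
Variables (F : fieldType) (N M1 M2 : nat).

(* A point (X,Y,I,J,X~,Y~,I~,J~,S) of the affine space of data.
   Linear maps C^a -> C^b are b x a matrices acting on column vectors. *)
Record qdata := QData {
  qX : 'M[F]_M1; qY : 'M[F]_M1;
  qI : 'M[F]_(M1, N); qJ : 'M[F]_(N, M1);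
  qXt : 'M[F]_M2; qYt : 'M[F]_M2;
  qIt : 'M[F]_(M2, 1); qJt : 'M[F]_(1, M2);
  qS : 'M[F]_(M2, M1) }.

(* C<A,B> Im(V) = whole space: the only subspace (of column vectors) that
   contains the column space of V and is stable under A and B is everything.
   Subspaces of column vectors are encoded, mxalgebra-style, as row spaces of
   transposes: a column vector v lies in W iff v^T is in the row space of W,
   and A v = (v^T A^T)^T. *)
Definition generates (m k : nat) (A B : 'M[F]_m) (V : 'M[F]_(m, k)) : Prop :=
  forall W : 'M[F]_m,
    (V^T <= W)%MS -> (W *m A^T <= W)%MS -> (W *m B^T <= W)%MS -> row_full W.

Definition moment_eqs (x : qdata) : Prop :=
  qX x *m qY x - qY x *m qX x + qI x *m qJ x = 0 /\
  qXt x *m qYt x - qYt x *m qXt x + qIt x *m qJt x = 0.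

(* stability: C<X,Y> Im I = C^M1 and C<X~,Y~>(Im I~ + Im S) = C^M2 *)
Definition stable_cond (x : qdata) : Prop :=
  generates (qX x) (qY x) (qI x) /\
  generates (qXt x) (qYt x) (row_mx (qIt x) (qS x)).

(* points of the stable locus whose orbits form M^{N,1}(M1,M2) *)
Definition Mpoint (x : qdata) : Prop := moment_eqs x /\ stable_cond x.

Definition open_cond (x : qdata) : Prop := generates (qXt x) (qYt x) (qIt x).

Definition act (g : 'M[F]_M1) (h : 'M[F]_M2) (x : qdata) : qdata :=
  QData (g *m qX x *m invmx g) (g *m qY x *m invmx g)
        (g *m qI x) (qJ x *m invmx g)
        (h *m qXt x *m invmx h) (h *m qYt x *m invmx h)
        (h *m qIt x) (qJt x *m invmx h)
        (h *m qS x *m invmx g).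

Inductive polyfun : (qdata -> F) -> Prop :=
  | pf_const (c : F) : polyfun (fun _ => c)
  | pf_X i j : polyfun (fun x => qX x i j)
  | pf_Y i j : polyfun (fun x => qY x i j)
  | pf_I i j : polyfun (fun x => qI x i j)
  | pf_J i j : polyfun (fun x => qJ x i j)
  | pf_Xt i j : polyfun (fun x => qXt x i j)
  | pf_Yt i j : polyfun (fun x => qYt x i j)
  | pf_It i j : polyfun (fun x => qIt x i j)
  | pf_Jt i j : polyfun (fun x => qJt x i j)
  | pf_S i j : polyfun (fun x => qS x i j)
  | pf_add f g : polyfun f -> polyfun g -> polyfun (fun x => f x + g x)
  | pf_mul f g : polyfun f -> polyfun g -> polyfun (fun x => f x * g x).

Definition rel_closed (Z : qdata -> Prop) : Prop :=
  exists P : (qdata -> F) -> Prop,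
    (forall f, P f -> polyfun f) /\
    (forall y, Mpoint y -> (Z y <-> forall f, P f -> f y = 0)).

Definition saturated (Z : qdata -> Prop) : Prop :=
  forall y g h, Mpoint y -> g \in unitmx -> h \in unitmx -> Z y -> Z (act g h y).

(* Closure in the quotient M = Mpoint / (GL_M1 x GL_M2) with its quotient
   topology: closed subsets of M correspond to saturated relatively closed
   subsets of the stable locus. x lies in (the orbit belonging to) the
   closure of U iff it lies in every such set containing U. *)
Definition in_closureM (U : qdata -> Prop) (x : qdata) : Prop :=
  forall Z, saturated Z -> rel_closed Z ->
    (forall y, Mpoint y -> U y -> Z y) -> Z x.

End Quiver.

(* Main.v *)
Require Import Defs.
From HB Require Import structures.
From mathcomp Require Import all_boot all_algebra complex.
From mathcomp Require Import reals.
Import GRing.Theory.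
Local Open Scope ring_scope.

From mathcomp Require Import zify.
Set Implicit Arguments. Unset Strict Implicit. Unset Printing Implicit Defensive.
Import Num.Theory.


Section LinAlg.
Variable F : numClosedFieldType.

Definition cyc n (b : 'M[F]_n) (x : 'rV[F]_n) :=
  forall k (S : 'M[F]_(k, n)), (x <= S)%MS -> (S *m b <= S)%MS -> row_full S.

Lemma row_free_kerP m n (A : 'M[F]_(m, n)) :
  (forall c : 'rV_m, c *m A = 0 -> c = 0) -> row_free A.
Proof.
move=> H; rewrite -kermx_eq0; apply/rowV0P => v /sub_kermxP; exact: H.
Qed.

Lemma cyc_embed r m (E : 'M[F]_(r, m)) c1 c x1 k (S : 'M_(k, m)) :
  cyc c1 x1 -> row_free E -> E *m c = c1 *m E ->
  (x1 *m E <= S)%MS -> (S *m c <= S)%MS -> (E <= S)%MS.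
Proof.
move=> cy fE Ec xS Sc.
pose S1 := ((S :&: E)%MS *m pinvmx E).
have memb : forall y : 'rV_r, (y <= S1)%MS = (y *m E <= S)%MS.
  move=> y; apply/idP/idP => H.
    apply: submx_trans (submxMr E H) _.
    by rewrite mulmxKpV ?capmxSr ?capmxSl.
  have H2 : (y *m E <= S :&: E)%MS by rewrite sub_capmx H submxMl.
  by rewrite -[y](mulmxKp fE) submxMr.
have fS1 : row_full S1.
  apply: (cy _ S1); first by rewrite memb.
  apply/row_subP => i; rewrite row_mul memb -mulmxA -Ec mulmxA.
  apply: submx_trans Sc; apply: submxMr; rewrite -memb; exact: row_sub.
apply/row_subP => i; rewrite -[E]mul1mx row_mul -memb.
exact: submx_full.
Qed.

Lemma full_from_sub m r (Q : 'M[F]_(r, m)) k (S : 'M_(k, m)) :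
  row_full Q -> (Q <= S)%MS -> row_full S.
Proof. by move=> fQ QS; rewrite -sub1mx (submx_trans _ QS) // sub1mx. Qed.


Lemma stable_horner n k (S : 'M[F]_(k, n.+1)) (c : 'M_n.+1) p :
  (S *m c <= S)%MS -> (S *m horner_mx c p <= S)%MS.
Proof.
move=> Sc; elim/poly_ind: p => [|p a IH].
  by rewrite rmorph0 mulmx0 sub0mx.
rewrite rmorphD rmorphM /= horner_mx_X horner_mx_C mulmxDr addmx_sub //.
  by rewrite mulmxA (submx_trans (submxMr _ IH)).
by rewrite mul_mx_scalar scalemx_sub.
Qed.

Lemma intertw_horner a b (X : 'M[F]_(a.+1, b.+1)) c c1 p :
  X *m c = c1 *m X -> X *m horner_mx c p = horner_mx c1 p *m X.
Proof.
move=> Xc; elim/poly_ind: p => [|p z IH].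
  by rewrite !rmorph0 mulmx0 mul0mx.
rewrite !rmorphD !rmorphM /= !horner_mx_X !horner_mx_C mulmxDr mulmxDl.
by rewrite mulmxA IH -mulmxA Xc mulmxA mul_mx_scalar mul_scalar_mx.
Qed.

Lemma row_free_E1 r1 r2 : row_free (row_mx 1%:M 0 : 'M[F]_(r1, r1 + r2)).
Proof.
apply: row_free_kerP => c; rewrite mul_mx_row mulmx1 mulmx0 => /eqP.
by rewrite -row_mx0 => /eqP /eq_row_mx [].
Qed.

Lemma row_free_E2 r1 r2 : row_free (row_mx 0 1%:M : 'M[F]_(r2, r1 + r2)).
Proof.
apply: row_free_kerP => c; rewrite mul_mx_row mulmx1 mulmx0 => /eqP.
by rewrite -row_mx0 => /eqP /eq_row_mx [].
Qed.

Lemma cyc_block r1 r2 (c1 : 'M[F]_r1.+1) (c2 : 'M[F]_r2.+1) x1 x2 :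
  cyc c1 x1 -> cyc c2 x2 -> coprimep (char_poly c1) (char_poly c2) ->
  cyc (block_mx c1 0 0 c2) (row_mx x1 x2).
Proof.
move=> cy1 cy2 /Bezout_eq1_coprimepP [[u v] /= Huv] k S xS Sc.
set c := block_mx c1 0 0 c2.
pose E1 := (row_mx 1%:M 0 : 'M[F]_(r1.+1, r1.+1 + r2.+1)).
pose E2 := (row_mx 0 1%:M : 'M[F]_(r2.+1, r1.+1 + r2.+1)).
have E1c : E1 *m c = c1 *m E1.
  by rewrite /E1 /c mul_row_block mul_mx_row !mulmx0 !mul0mx !mul1mx !mulmx1 ?addr0 ?add0r.
have E2c : E2 *m c = c2 *m E2.
  by rewrite /E2 /c mul_row_block mul_mx_row !mulmx0 !mul0mx !mul1mx !mulmx1 ?addr0 ?add0r.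
have xE : row_mx x1 x2 = x1 *m E1 + x2 *m E2.
  by rewrite /E1 /E2 !mul_mx_row !mulmx1 !mulmx0 add_row_mx addr0 add0r.
have CH1 := Cayley_Hamilton c1; have CH2 := Cayley_Hamilton c2.
have H1 : horner_mx c1 (v * char_poly c2) = 1.
  have -> : v * char_poly c2 = 1 - u * char_poly c1.
    by rewrite -Huv addrAC subrr add0r.
  by rewrite rmorphB rmorphM /= CH1 mulr0 subr0 rmorph1.
have H2 : horner_mx c2 (v * char_poly c2) = 0.
  by rewrite rmorphM /= CH2 mulr0.
have H3 : horner_mx c2 (u * char_poly c1) = 1.
  have -> : u * char_poly c1 = 1 - v * char_poly c2.
    by rewrite -Huv addrK.
  by rewrite rmorphB rmorphM /= CH2 mulr0 subr0 rmorph1.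
have H4 : horner_mx c1 (u * char_poly c1) = 0.
  by rewrite rmorphM /= CH1 mulr0.
have S1 : (E1 <= S)%MS.
  apply: (cyc_embed cy1 (row_free_E1 _ _) E1c _ Sc).
  have := stable_horner (v * char_poly c2) Sc.
  move/(submx_trans (submxMr (horner_mx c (v * char_poly c2)) xS)).
  rewrite xE mulmxDl -!mulmxA !(intertw_horner _ E1c) !(intertw_horner _ E2c).
  by rewrite H1 H2 !mul1mx mul0mx mulmx0 addr0.
have S2 : (E2 <= S)%MS.
  apply: (cyc_embed cy2 (row_free_E2 _ _) E2c _ Sc).
  have := stable_horner (u * char_poly c1) Sc.
  move/(submx_trans (submxMr (horner_mx c (u * char_poly c1)) xS)).
  rewrite xE mulmxDl -!mulmxA !(intertw_horner _ E1c) !(intertw_horner _ E2c).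
  by rewrite H3 H4 !mul1mx mul0mx mulmx0 add0r.
rewrite -sub1mx -[1%:M]/(1%:M : 'M_(r1.+1 + r2.+1)) scalar_mx_block.
by rewrite -[block_mx _ _ _ _]/(col_mx E1 E2) col_mx_sub S1 S2.
Qed.


Lemma exists_notin (s : seq F) : exists k : F, k \notin s.
Proof.
pose t := [seq (i%:R : F) | i <- iota 0 (size s).+1].
have ut : uniq t.
  rewrite map_inj_uniq ?iota_uniq // => i j /eqP; rewrite eqr_nat => /eqP.
  done.
case: (boolP (all (fun k => k \in s) t)) => [/allP Hall|].
  have := uniq_leq_size ut Hall; rewrite size_map size_iota ltnn //.
rewrite -has_predC => /hasP [k _ Hk]; by exists k.
Qed.

Lemma root_in_normal (p : {poly F}) (rs : seq F) z : p != 0 ->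
  p = lead_coef p *: \prod_(w <- rs) ('X - w%:P) -> root p z -> z \in rs.
Proof.
move=> p0 e; rewrite {1}e rootZ ?lead_coef_eq0 // root_prod_XsubC //.
Qed.

Lemma coprime_nocommon (p q : {poly F}) :
  (forall z, root p z -> ~~ root q z) -> coprimep p q.
Proof.
move=> H; rewrite coprimep_def; apply/negPn/negP => /closed_rootP [z].
by rewrite root_gcd => /andP [/H /negP].
Qed.

Lemma coprime_shift r (p : {poly F}) (b : 'M[F]_r) : p != 0 ->
  exists k, coprimep p (char_poly (b + k%:M)).
Proof.
move=> p0.
have [rs ers] := closed_field_poly_normal p.
have [rq erq] := closed_field_poly_normal (char_poly b).
have q0 : char_poly b != 0 by rewrite -size_poly_eq0 size_char_poly.
have [k Hk] := exists_notin [seq z - w | z <- rs, w <- rq].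
exists k; apply: coprime_nocommon => z /(root_in_normal p0 ers) zin.
apply/negP; rewrite -eigenvalue_root_char => ev.
have : root (char_poly b) (z - k).
  rewrite -eigenvalue_root_char; move: ev; rewrite /eigenvalue /eigenspace.
  by rewrite raddfB /= addrAC opprB addrA addrAC.
move/(root_in_normal q0 erq) => win.
move/negP: Hk; apply; apply/allpairsP; exists (z, z - k) => /=.
by rewrite zin win opprB addrC subrK.
Qed.


Lemma cyc_shift n (b : 'M[F]_n) x k : cyc b x -> cyc (b + k%:M) x.
Proof.
move=> cy m S xS Sc; apply: cy xS _.
have -> : S *m b = S *m (b + k%:M) - k *: S.
  by rewrite mulmxDr mul_mx_scalar addrK.
by rewrite addmx_sub // ?eqmx_opp scalemx_sub.
Qed.

Lemma glue n r1 r2 (B1 : 'M[F]_(r1.+1, n)) (B2 : 'M[F]_(r2.+1, n)) (a : 'M_n)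
    (a1 : 'M_r1.+1) (a2 : 'M_r2.+1) b1 b2 x1 x2 :
  row_free (col_mx B1 B2) -> row_full (col_mx B1 B2) ->
  B1 *m a = a1 *m B1 -> B2 *m a = a2 *m B2 ->
  a1 *m b1 = b1 *m a1 -> a2 *m b2 = b2 *m a2 -> cyc b1 x1 -> cyc b2 x2 ->
  exists b x, a *m b = b *m a /\ cyc b x.
Proof.
move=> frQ fQ e1 e2 c1 c2 cy1 cy2.
have p0 : char_poly b1 != 0 by rewrite -size_poly_eq0 size_char_poly.
have [k cop] := coprime_shift b2 p0.
set Q := col_mx B1 B2.
set c := block_mx b1 0 0 (b2 + k%:M); set A := block_mx a1 0 0 a2.
have PQ : pinvmx Q *m Q = 1%:M.
  by rewrite -[pinvmx Q]mul1mx mulmxKpV // sub1mx.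
have QP : Q *m pinvmx Q = 1%:M by rewrite -{1}[Q]mul1mx mulmxKp.
move: (pinvmx Q) PQ QP => P PQ QP.
have QA : Q *m a = A *m Q.
  by rewrite /Q /A mul_col_mx mul_block_col e1 e2 !mul0mx addr0 add0r.
have Ac : A *m c = c *m A.
  rewrite /A /c !mulmx_block !mulmx0 !mul0mx !addr0 !add0r c1.
  by rewrite mulmxDr mulmxDl c2 mul_mx_scalar mul_scalar_mx.
have ea : a = P *m A *m Q by rewrite -mulmxA -QA mulmxA PQ mul1mx.
exists (P *m c *m Q), (row_mx x1 x2 *m Q); split.
  rewrite ea !mulmxA -[P *m A *m Q *m P]mulmxA QP mulmx1.
  by rewrite -[P *m c *m Q *m P]mulmxA QP mulmx1 -(mulmxA P A) Ac mulmxA.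
move=> m S xS Sc; apply: (full_from_sub fQ).
apply: (cyc_embed (cyc_block cy1 (cyc_shift (k := k) cy2) cop) frQ _ xS Sc).
by rewrite !mulmxA QP mul1mx.
Qed.


Lemma glue' n r1 r2 (B1 : 'M[F]_(r1, n)) (B2 : 'M[F]_(r2, n)) (a : 'M_n)
    (a1 : 'M_r1) (a2 : 'M_r2) b1 b2 x1 x2 : (0 < r1)%N -> (0 < r2)%N ->
  row_free (col_mx B1 B2) -> row_full (col_mx B1 B2) ->
  B1 *m a = a1 *m B1 -> B2 *m a = a2 *m B2 ->
  a1 *m b1 = b1 *m a1 -> a2 *m b2 = b2 *m a2 -> cyc b1 x1 -> cyc b2 x2 ->
  exists b x, a *m b = b *m a /\ cyc b x.
Proof.
case: r1 B1 a1 b1 x1 => // r1 B1 a1 b1 x1.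
case: r2 B2 a2 b2 x2 => // r2 B2 a2 b2 x2 _ _.
exact: glue.
Qed.

Definition lemC_at n := forall a : 'M[F]_n, exists b x, a *m b = b *m a /\ cyc b x.

Lemma restr_eq n m (U : 'M[F]_(m, n)) a :
  (U *m a <= U)%MS ->
  row_base U *m a = (row_base U *m a *m pinvmx (row_base U)) *m row_base U.
Proof.
move=> Ua; rewrite mulmxKpV //.
by rewrite stablemx_row_base.
Qed.

Lemma split_step n m1 m2 (a : 'M[F]_n) (U : 'M_(m1, n)) (W : 'M_(m2, n)) :
  (forall m, (m < n)%N -> lemC_at m) ->
  (U *m a <= U)%MS -> (W *m a <= W)%MS -> (U :&: W = 0)%MS ->
  (\rank U + \rank W = n)%N -> (0 < \rank U)%N -> (0 < \rank W)%N ->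
  exists b x, a *m b = b *m a /\ cyc b x.
Proof.
move=> IH Ua Wa UW rk rU rW.
have ltU : (\rank U < n)%N by rewrite -[X in (_ < X)%N]rk -{1}[\rank U]addn0 ltn_add2l.
have ltW : (\rank W < n)%N by rewrite -[X in (_ < X)%N]rk -{1}[\rank W]add0n ltn_add2r.
have [b1 [x1 [c1 cy1]]] := IH _ ltU (row_base U *m a *m pinvmx (row_base U)).
have [b2 [x2 [c2 cy2]]] := IH _ ltW (row_base W *m a *m pinvmx (row_base W)).
have rkQ : \rank (col_mx (row_base U) (row_base W)) = n.
  rewrite -addsmxE (adds_eqmx (eq_row_base U) (eq_row_base W)).
  by rewrite mxrank_disjoint_sum.
apply: (glue' rU rW _ _ (restr_eq Ua) (restr_eq Wa) c1 c2 cy1 cy2).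
  by rewrite /row_free rkQ -[X in X == _]rk.
by rewrite /row_full rkQ.
Qed.


Lemma powS n (N : 'M[F]_n) i : N ^+ i *m N = N ^+ i.+1.
Proof. by rewrite exprSr mulmxE. Qed.

Lemma powD n (N : 'M[F]_n) i j : N ^+ i *m N ^+ j = N ^+ (i + j).
Proof. by rewrite exprD mulmxE. Qed.

Lemma powSl n (N : 'M[F]_n) i : N *m N ^+ i = N ^+ i.+1.
Proof. by rewrite exprS mulmxE. Qed.

Lemma pow_high n (N : 'M[F]_n) e p : N ^+ e = 0 -> (e <= p)%N -> N ^+ p = 0.
Proof. by move=> Ne lep; rewrite -(subnKC lep) exprD Ne mul0r. Qed.

Definition krylov n e (u : 'rV[F]_n) (N : 'M[F]_n) : 'M_(e, n) :=
  \matrix_(i < e) (u *m N ^+ i).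

Lemma krylovK n e (u : 'rV[F]_n) N i : row i (krylov e u N) = u *m N ^+ i.
Proof. by rewrite rowK. Qed.

Lemma nil_decomp n (N : 'M[F]_n) e : N ^+ e = 0 -> N ^+ e.-1 != 0 ->
  (0 < e)%N -> exists (u : 'rV_n) (W : 'M_n),
   [/\ row_free (krylov e u N), (krylov e u N :&: W = 0)%MS, (W *m N <= W)%MS
      & (n <= e + \rank W)%N].
Proof.
move=> Ne Ne1 e0.
have [i [j nz]] : exists i j, (N ^+ e.-1) i j != 0.
  case: (boolP [exists i, exists j, (N ^+ e.-1) i j != 0]).
    by move=> /existsP [i /existsP [j nz]]; exists i, j.
  move=> /existsPn H; case/negP: Ne1; apply/eqP/matrixP => i j.
  by have := H i; rewrite negb_exists => /forallP /(_ j); rewrite negbK mxE => /eqP.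
pose u : 'rV[F]_n := delta_mx 0 i.
pose phi : 'cV[F]_n := ((N ^+ e.-1) i j)^-1 *: delta_mx j 0.
have key1 : (u *m N ^+ e.-1 *m phi) 0 0 = 1.
  rewrite -rowE /phi -scalemxAr mxE -[row i _ *m _]/(row i (N ^+ e.-1) *m delta_mx j 0).
  rewrite -colE mxE mxE mulVf //.
pose Phi := \matrix_(r < n, k < e) ((N ^+ k *m phi) r 0).
have PhiE : forall (x : 'rV_n) (k : 'I_e), (x *m Phi) 0 k = (x *m N ^+ k *m phi) 0 0.
  move=> x k; rewrite -mulmxA !mxE; apply: eq_bigr => r _; rewrite mxE //.
pose K := krylov e u N.
have key : forall c : 'rV_e, c *m K *m Phi = 0 -> c = 0.
  move=> c cK; apply/rowP => k0; rewrite mxE; apply/eqP/negP => /negP nzk0.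
  case: (@arg_minnP _ k0 (fun k => c 0 k != 0) (fun k : 'I_e => nat_of_ord k) nzk0).
  move=> i0 nzi0 Hmin; have i0e := ltn_ord i0.
  have lti : (e.-1 - i0 < e)%N by lia.
  have : (c *m K *m N ^+ (e.-1 - i0) *m phi) 0 0 = 0.
    by have := PhiE (c *m K) (Ordinal lti); rewrite cK mxE.
  rewrite [c *m K]mulmx_sum_row !mulmx_suml summxE (bigD1 i0) //= big1.
    rewrite addr0 krylovK -!scalemxAl mxE -(mulmxA u) powD.
    have -> : (i0 + (e.-1 - i0) = e.-1)%N by lia.
    by rewrite key1 mulr1 => /eqP; rewrite (negPf nzi0).
  move=> k kne; rewrite krylovK -!scalemxAl mxE -(mulmxA u) powD.
  case: (ltnP k i0) => [lt|ge].
    have : ~~ (c 0 k != 0) by apply/negP => /Hmin; rewrite leqNgt lt.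
    by rewrite negbK => /eqP ->; rewrite mul0r.
  have gt : (i0 < k)%N by rewrite ltn_neqAle ge andbT; apply: contra kne => /eqP e'; apply/eqP/val_inj.
  rewrite (pow_high Ne); last by lia.
  by rewrite mulmx0 mul0mx mxE mulr0.
exists u, (kermx Phi); split.
- by apply: row_free_kerP => c cK; apply: key; rewrite cK mul0mx.
- apply/eqP/rowV0P => v; rewrite sub_capmx => /andP [/submxP [c ->] /sub_kermxP H].
  by rewrite (key c H) mul0mx.
- apply/sub_kermxP/row_matrixP => r; rewrite rowE row0 2!mulmxA.
  have xP : (delta_mx 0 r : 'rV[F]_n) *m kermx Phi *m Phi = 0.
    by rewrite -mulmxA mulmx_ker mulmx0.
  move: ((delta_mx 0 r : 'rV[F]_n) *m kermx Phi) xP => x xP.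
  apply/rowP => k; rewrite PhiE [RHS]mxE -(mulmxA x N) powSl.
  case: (ltnP k.+1 e) => [lt|ge].
    by have := PhiE x (Ordinal lt); rewrite xP [LHS]mxE => <-.
  by rewrite (pow_high Ne ge) mulmx0 mul0mx mxE.
- rewrite mxrank_ker; have := rank_leq_col Phi; have := rank_leq_row Phi; lia.
Qed.


Lemma stable_shift n k (S : 'M[F]_(k, n)) N c :
  (S *m N <= S)%MS -> (S *m (N + c%:M) <= S)%MS.
Proof. by move=> SN; rewrite mulmxDr mul_mx_scalar addmx_sub // scalemx_sub. Qed.

Lemma krylov_sub n e (u : 'rV[F]_n) N k (S : 'M_(k, n)) :
  (u <= S)%MS -> (S *m N <= S)%MS -> (krylov e u N <= S)%MS.
Proof.
move=> uS SN; apply/row_subP => i; rewrite krylovK.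
elim: (nat_of_ord i) => [|j IHj]; first by rewrite expr0 mulmx1.
by rewrite -powS mulmxA (submx_trans (submxMr N IHj)).
Qed.

Lemma krylov_stable n e (u : 'rV[F]_n) N : N ^+ e = 0 ->
  (krylov e u N *m N <= krylov e u N)%MS.
Proof.
move=> Ne; apply/row_subP => i; rewrite row_mul krylovK -mulmxA powS.
case: (ltnP i.+1 e) => [lt|ge].
  by have := row_sub (Ordinal lt) (krylov e u N); rewrite krylovK.
by rewrite (pow_high Ne ge) mulmx0 sub0mx.
Qed.

Theorem lemC n : lemC_at n.
Proof.
elim/ltn_ind: n => n IH a.
case: n IH a => [|n'] IH a.
  exists 0, 0; split; first by rewrite mulmx0 mul0mx.
  by move=> k S _ _; rewrite /row_full; have := rank_leq_col S; rewrite leqn0.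
have [lam rootlam] : exists lam, root (char_poly a) lam.
  by apply/closed_rootP; rewrite size_char_poly.
have cp0 : char_poly a != 0 by rewrite -size_poly_eq0 size_char_poly.
case: (multiplicity_XsubC (char_poly a) lam) => m [q]; rewrite cp0 /= => nq ea.
have m0 : (0 < m)%N.
  case: m ea => // ea; move: rootlam; rewrite ea expr0 mulr1 => r.
  by rewrite r in nq.
set p := ('X - lam%:P) ^+ m.
have cop : coprimep p q by rewrite coprimep_expl // coprimep_sym coprimep_XsubC.
have GK0 := mxdirect_kermxpoly a cop.
have GKfull : (kermxpoly a p + kermxpoly a q :=: 1%:M)%MS.
  apply: eqmx_trans (eqmx_sym (kermxpolyM a cop)) _.
  by apply: kermxpoly_min; rewrite mulrC -ea mxminpoly_dvd_char.
have rk : (\rank (kermxpoly a p) + \rank (kermxpoly a q) = n'.+1)%N.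
  by rewrite -mxrank_disjoint_sum // GKfull mxrank1.
have stG : (kermxpoly a p *m a <= kermxpoly a p)%MS.
  exact: comm_mx_stable_kermxpoly.
have stK : (kermxpoly a q *m a <= kermxpoly a q)%MS.
  exact: comm_mx_stable_kermxpoly.
have hp : horner_mx a p = (a - lam%:M) ^+ m.
  by rewrite rmorphXn rmorphB /= horner_mx_X horner_mx_C.
have Gpos : (0 < \rank (kermxpoly a p))%N.
  have : eigenvalue a lam by rewrite eigenvalue_root_char.
  rewrite /eigenvalue -mxrank_eq0 -lt0n => ev; apply: leq_trans ev _.
  apply: mxrankS; rewrite /eigenspace /kermxpoly hp.
  apply/sub_kermxP; rewrite -(prednK m0) exprS -mulmxE mulmxA mulmx_ker mul0mx //.
case: (posnP (\rank (kermxpoly a q))) => [K0|Kpos]; last first.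
  exact: (split_step IH stG stK GK0 rk Gpos Kpos).
set N := a - lam%:M.
have aN : a = N + lam%:M by rewrite /N subrK.
have NmZ : N ^+ m = 0.
  have fG : row_full (kermxpoly a p) by rewrite /row_full -[X in _ == X]rk K0 addn0.
  have : (1%:M <= kermxpoly a p)%MS by rewrite sub1mx.
  by rewrite /kermxpoly hp => /sub_kermxP; rewrite mul1mx.
have exE : exists e, N ^+ e == 0 by exists m; rewrite NmZ.
case: (ex_minnP exE) => e /eqP Ne Hmin.
have e0 : (0 < e)%N.
  case: e Ne Hmin => // /eqP; rewrite expr0 oner_eq0 //.
have Ne1 : N ^+ e.-1 != 0.
  by apply/negP => /Hmin H; exfalso; lia.
have [u [W [frK KW WN rkW]]] := nil_decomp Ne Ne1 e0.
set Kr := krylov e u N in frK KW rkW *.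
have KrN : (Kr *m N <= Kr)%MS by apply: krylov_stable.
have Kra : (Kr *m a <= Kr)%MS by rewrite aN stable_shift.
have Wa : (W *m a <= W)%MS by rewrite aN stable_shift.
have rKr : \rank Kr = e by apply/eqP; rewrite eqn_leq rank_leq_row row_leq_rank.
have rKrn : (e <= n'.+1)%N by rewrite -rKr rank_leq_col.
case: (posnP (\rank W)) => [W0|Wpos].
  exists a, u; split => // k S uS Sa.
  have SN : (S *m N <= S)%MS.
    have -> : N = a + (- lam)%:M by rewrite /N raddfN.
    exact: stable_shift.
  apply: (full_from_sub _ (krylov_sub e uS SN)).
  by rewrite -col_leq_rank -/Kr rKr; move: rkW; rewrite W0 addn0.
have rk2 : (\rank Kr + \rank W = n'.+1)%N.
  apply/eqP; rewrite eqn_leq -mxrank_disjoint_sum // rank_leq_col /=.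
  by rewrite mxrank_disjoint_sum //; move: rkW; rewrite -{1}rKr.
by apply: (split_step IH Kra Wa KW rk2) => //; move: e0; rewrite -{1}rKr.
Qed.


Lemma horner_mx_expand n (A : 'M[F]_n.+1) p :
  horner_mx A p = \sum_(i < size p) p`_i *: A ^+ i.
Proof.
rewrite -{1}[p]coefK poly_def linear_sum /=; apply: eq_bigr => i _.
by rewrite linearZ /= rmorphXn /= horner_mx_X.
Qed.

Lemma cyc_krylov n (b : 'M[F]_n) x : cyc b x -> row_full (krylov n x b).
Proof.
case: n b x => [|n] b x cy.
  by rewrite -col_leq_rank.
apply: (cy _ (krylov n.+1 x b)).
  by have := row_sub 0 (krylov n.+1 x b); rewrite krylovK expr0 mulmx1.
apply/row_subP => i; rewrite row_mul krylovK -mulmxA powS.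
case: (ltnP i.+1 n.+1) => [lt|ge].
  by have := row_sub (Ordinal lt) (krylov n.+1 x b); rewrite krylovK.
have -> : i.+1 = n.+1 by apply/eqP; rewrite eqn_leq ge ltn_ord.
have CH := Cayley_Hamilton b.
rewrite horner_mx_expand size_char_poly big_ord_recr /= in CH.
have lc : (char_poly b)`_n.+1 = 1.
  by have := char_poly_monic b; rewrite monicE lead_coefE size_char_poly => /eqP.
rewrite lc scale1r in CH.
have -> : b ^+ n.+1 = - \sum_(i < n.+1) (char_poly b)`_i *: b ^+ i.
  by apply/eqP; rewrite -addr_eq0 addrC CH.
rewrite mulmxN mulmx_sumr eqmx_opp summx_sub // => j _.
rewrite -scalemxAr scalemx_sub //.
by have := row_sub j (krylov n.+1 x b); rewrite krylovK.
Qed.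

End LinAlg.


Section LemA.
Variable F : numClosedFieldType.
Variable m : nat.
Variables (X Y : 'M[F]_m) (I : 'M[F]_(m, 1)) (J : 'M[F]_(1, m)).
Hypothesis hXY : X *m Y - Y *m X + I *m J = 0.

Lemma YXE : Y *m X = X *m Y + I *m J.
Proof. by rewrite -[Y *m X]addr0 -hXY addrA addrCA subrr addr0. Qed.

Lemma powD' (N : 'M[F]_m) i j : N ^+ i *m N ^+ j = N ^+ (i + j).
Proof. by rewrite exprD mulmxE. Qed.
Lemma powS' (N : 'M[F]_m) i : N ^+ i *m N = N ^+ i.+1.
Proof. by rewrite exprSr mulmxE. Qed.
Lemma powSl' (N : 'M[F]_m) i : N *m N ^+ i = N ^+ i.+1.
Proof. by rewrite exprS mulmxE. Qed.

Lemma slide a k (L : 'M[F]_(1, m)) (R : 'M[F]_(m, k)) :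
  (forall i, (i < a)%N -> L *m X ^+ i *m I = 0) ->
  L *m Y *m X ^+ a *m R = L *m X ^+ a *m Y *m R.
Proof.
elim: a R => [|a IH] R H; first by rewrite !expr0 !mulmx1.
rewrite -!powS'.
have -> : L *m Y *m (X ^+ a *m X) *m R = L *m Y *m X ^+ a *m (X *m R).
  by rewrite !mulmxA.
rewrite (IH (X *m R)); last by move=> i lt; apply: H; lia.
have -> : L *m X ^+ a *m Y *m (X *m R) = L *m X ^+ a *m (Y *m X) *m R.
  by rewrite !mulmxA.
rewrite YXE mulmxDr mulmxDl.
have -> : L *m X ^+ a *m (I *m J) *m R = (L *m X ^+ a *m I) *m J *m R.
  by rewrite !mulmxA.
by rewrite H // !mul0mx addr0 !mulmxA.
Qed.


Definition Zm p a q := J *m Y ^+ p *m X ^+ a *m Y ^+ q *m I.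

Lemma step1 k : (forall p a q, (p + a + q < k)%N -> Zm p a q = 0) ->
  forall p a q, (p + a + q = k)%N -> Zm p a q = Zm 0 a (p + q).
Proof.
move=> IHk; elim=> [|p IH] a q H; first by [].
rewrite /Zm -powS'.
have -> : J *m (Y ^+ p *m Y) *m X ^+ a *m Y ^+ q *m I =
          (J *m Y ^+ p) *m Y *m X ^+ a *m (Y ^+ q *m I) by rewrite !mulmxA.
rewrite slide; last first.
  move=> i lt; have := IHk p i 0%N; rewrite /Zm expr0 mulmx1 => -> //; lia.
have -> : J *m Y ^+ p *m X ^+ a *m Y *m (Y ^+ q *m I) = Zm p a q.+1.
  by rewrite /Zm -powSl' !mulmxA.
by rewrite IH ?addnS //; lia.
Qed.

Lemma tr_slide a b0 c : (forall s t, (s + t = b0)%N -> \tr (Zm t a s) = c) ->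
  forall b s, (s + b = b0)%N ->
  \tr (X ^+ a *m Y ^+ s *m Y ^+ b *m X *m Y) =
  \tr (X ^+ a *m Y ^+ s *m X *m Y ^+ b *m Y) + b%:R * c.
Proof.
move=> Hc; elim=> [|b IH] s H.
  by rewrite !expr0 !mulmx1 mul0r addr0.
have -> : X ^+ a *m Y ^+ s *m Y ^+ b.+1 = X ^+ a *m Y ^+ s.+1 *m Y ^+ b.
  by rewrite -!mulmxA !powD' addSnnS.
rewrite IH; last by lia.
rewrite -powS'.
have -> : X ^+ a *m (Y ^+ s *m Y) *m X *m Y ^+ b *m Y =
          X ^+ a *m Y ^+ s *m (Y *m X) *m Y ^+ b *m Y by rewrite !mulmxA.
rewrite YXE mulmxDr !mulmxDl mxtraceD.
have -> : X ^+ a *m Y ^+ s *m (X *m Y) *m Y ^+ b *m Y =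
          X ^+ a *m Y ^+ s *m X *m Y ^+ b.+1 *m Y.
  by rewrite -powSl' !mulmxA.
have -> : \tr (X ^+ a *m Y ^+ s *m (I *m J) *m Y ^+ b *m Y) = c.
  rewrite -(Hc s b.+1 H).
  have -> : X ^+ a *m Y ^+ s *m (I *m J) *m Y ^+ b *m Y =
            (X ^+ a *m Y ^+ s *m I) *m (J *m Y ^+ b *m Y) by rewrite !mulmxA.
  by rewrite mxtrace_mulC /Zm -powS' !mulmxA.
by rewrite -addrA mulrSr mulrDl mul1r [c + _]addrC.
Qed.


Lemma mx11_tr (M : 'M[F]_1) : \tr M = 0 -> M = 0.
Proof.
move=> t; apply/matrixP => i j; rewrite !ord1 mxE.
by move: t; rewrite /mxtrace big_ord1.
Qed.

Lemma Zzero k : forall p a q, (p + a + q = k)%N -> Zm p a q = 0.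
Proof.
elim/ltn_ind: k => k IH p a q H.
have IHk : forall p a q, (p + a + q < k)%N -> Zm p a q = 0.
  by move=> p' a' q' lt; apply: (IH _ lt).
rewrite (step1 IHk H).
set b := (p + q)%N.
set c := \tr (Zm 0 a b).
have Hc : forall s t, (s + t = b)%N -> \tr (Zm t a s) = c.
  move=> s t st; have eb : b = (p + q)%N by [].
  rewrite /c (step1 IHk (p := t) (a := a) (q := s)); first by rewrite addnC st.
  lia.
apply: mx11_tr; rewrite -/c.
have e1 : c = \tr (X ^+ a *m Y ^+ b *m (I *m J)).
  by rewrite /c /Zm expr0 mulmx1 -!mulmxA mxtrace_mulC !mulmxA.
have IJ : I *m J = Y *m X - X *m Y by rewrite YXE addrAC subrr add0r.
have e2 := @tr_slide a b c Hc b 0%N (add0n b).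
rewrite expr0 !mulmx1 in e2.
have e3 : \tr (X ^+ a *m Y ^+ b *m (Y *m X)) = \tr (X ^+ a *m X *m Y ^+ b *m Y).
  have -> : X ^+ a *m X = X *m X ^+ a by rewrite powS' powSl'.
  by rewrite !mulmxA mxtrace_mulC !mulmxA.
have e4 : \tr (X ^+ a *m Y ^+ b *m (X *m Y)) = \tr (X ^+ a *m Y ^+ b *m X *m Y).
  by rewrite !mulmxA.
move: e1; rewrite IJ mulmxBr raddfB /= e3 e4 e2 opprD addrA subrr add0r => e5.
have : (b.+1%:R : F) * c = 0 by rewrite mulrSr mulrDl mul1r {2}e5 subrr.
by move/eqP; rewrite mulf_eq0 pnatr_eq0 /= => /eqP.
Qed.


Lemma slide2 q k (L : 'M[F]_(1, m)) (R : 'M[F]_(m, k)) :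
  (forall j, (j < q)%N -> L *m Y ^+ j *m I = 0) ->
  L *m Y ^+ q *m X *m R = L *m X *m Y ^+ q *m R.
Proof.
elim: q R => [|q IH] R H; first by rewrite !expr0 !mulmx1.
have -> : L *m Y ^+ q.+1 *m X *m R = L *m Y ^+ q *m (Y *m X) *m R.
  by rewrite -powS' !mulmxA.
rewrite YXE mulmxDr mulmxDl.
have -> : L *m Y ^+ q *m (I *m J) *m R = (L *m Y ^+ q *m I) *m J *m R.
  by rewrite !mulmxA.
rewrite H // !mul0mx addr0.
have -> : L *m Y ^+ q *m (X *m Y) *m R = L *m Y ^+ q *m X *m (Y *m R).
  by rewrite !mulmxA.
rewrite IH; last by move=> j lt; apply: H; lia.
by rewrite -powS' !mulmxA.
Qed.

End LemA.

Section Stab.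
Variable F : numClosedFieldType.

Lemma stab m (f : 'M[F]_m -> 'M[F]_m) S0 :
  (forall S, (S <= f S)%MS) -> (forall S T, (S <= T)%MS -> (f S <= f T)%MS) ->
  (f (iter m f S0) <= iter m f S0)%MS.
Proof.
move=> ext mono.
have H : forall k, (exists2 j, (j < k)%N & (f (iter j f S0) <= iter j f S0)%MS)
                   \/ (k <= \rank (iter k f S0))%N.
  elim=> [|k [[j jk Hj]|IHk]]; first by right.
  - by left; exists j => //; lia.
  case: (boolP (f (iter k f S0) <= iter k f S0)%MS) => [Hk|Hk].
    by left; exists k.
  right; rewrite iterS; apply: leq_ltn_trans IHk _.
  have := mxrank_leqif_sup (ext (iter k f S0)).
  by move=> [le eq]; rewrite ltn_neqAle le andbT eq.
have [[j jm Hj]|] := H m.+1; last first.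
  by move=> H2; have := rank_leq_col (iter m.+1 f S0); lia.
have prop : forall i, (j <= i)%N -> (f (iter i f S0) <= iter i f S0)%MS.
  elim=> [|i IHi] ji; first by move: ji; rewrite leqn0 => /eqP <-.
  case: (ltnP j i.+1) => [lt|ge]; last by have e : j = i.+1 by [lia]; rewrite -e.
  by rewrite iterS; apply: mono; apply: IHi; lia.
by apply: prop; lia.
Qed.

End Stab.

Section LemAmain.
Variable F : numClosedFieldType.

Lemma lemA m (X Y : 'M[F]_m) (I : 'M[F]_(m, 1)) (J : 'M[F]_(1, m)) :
  X *m Y - Y *m X + I *m J = 0 ->
  (forall W : 'M_m, (I^T <= W)%MS -> (W *m X^T <= W)%MS -> (W *m Y^T <= W)%MS ->
     row_full W) -> J = 0.
Proof.
move=> hXY gen.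
pose f := fun S : 'M[F]_m => (S + S *m X^T + S *m Y^T)%MS.
have ext : forall S, (S <= f S)%MS by move=> S; rewrite /f -addsmxA addsmxSl.
have mono : forall S T, (S <= T)%MS -> (f S <= f T)%MS.
  by move=> S T ST; rewrite /f !addsmxS // submxMr.
pose S0 := <<I^T>>%MS.
have T : forall k p a q,
    (iter k f S0 <= kermx ((J *m Y ^+ p *m X ^+ a *m Y ^+ q)^T))%MS.
  elim=> [|k IH] p a q /=.
    rewrite /S0 genmxE; apply/sub_kermxP; rewrite -trmx_mul.
    by have := Zzero hXY (erefl (p + a + q)%N); rewrite /Zm => ->; rewrite trmx0.
  rewrite /f !addsmx_sub IH /=; apply/andP; split; apply/sub_kermxP.
    rewrite -(mulmxA _ X^T) -trmx_mul.
    have -> : J *m Y ^+ p *m X ^+ a *m Y ^+ q *m X =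
              J *m Y ^+ p *m X ^+ a.+1 *m Y ^+ q *m 1%:M.
      rewrite -[LHS]mulmx1 (@slide2 _ _ X Y I J hXY q m (J *m Y ^+ p *m X ^+ a) 1%:M).
        by rewrite mulmx1 -powS' !mulmxA mulmx1.
      move=> j lt; have := Zzero hXY (erefl (p + a + j)%N); rewrite /Zm //.
    by rewrite mulmx1; apply/sub_kermxP; apply: IH.
  rewrite -(mulmxA _ Y^T) -trmx_mul -(mulmxA _ (Y ^+ q) Y) powS'.
  by apply/sub_kermxP; apply: IH.
have S0S : forall k, (S0 <= iter k f S0)%MS.
  by elim=> [|k IH] //=; apply: submx_trans IH (ext _).
have fS := stab S0 ext mono.
have full : row_full (iter m f S0).
  apply: gen.
  - by apply: submx_trans (S0S m); rewrite /S0 genmxE.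
  - by apply: submx_trans fS; rewrite /f -addsmxA addsmxC -addsmxA addsmxSl.
  - by apply: submx_trans fS; rewrite /f addsmxSr.
have := T m 0%N 0%N 0%N; rewrite !expr0 !mulmx1 => H.
have : (1%:M <= kermx J^T)%MS by apply: submx_trans H; rewrite sub1mx.
by move/sub_kermxP; rewrite mul1mx => /(congr1 trmx); rewrite trmxK trmx0.
Qed.

End LemAmain.


Section PolyT.
Variable F : numClosedFieldType.

Definition ispoly (g : F -> F) := exists p : {poly F}, forall t, g t = p.[t].

Lemma ispoly_const c : ispoly (fun _ => c).
Proof. by exists c%:P => t; rewrite hornerC. Qed.

Lemma ispoly_lin a b : ispoly (fun t => a + t * b).
Proof. by exists (a%:P + 'X * b%:P) => t; rewrite hornerD hornerM hornerX !hornerC. Qed.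

Lemma ispoly_add f g : ispoly f -> ispoly g -> ispoly (fun t => f t + g t).
Proof. by move=> [p Hp] [q Hq]; exists (p + q) => t; rewrite hornerD Hp Hq. Qed.

Lemma ispoly_mul f g : ispoly f -> ispoly g -> ispoly (fun t => f t * g t).
Proof. by move=> [p Hp] [q Hq]; exists (p * q) => t; rewrite hornerM Hp Hq. Qed.

Lemma ispoly_ext f g : (forall t, f t = g t) -> ispoly f -> ispoly g.
Proof. by move=> e [p Hp]; exists p => t; rewrite -e. Qed.

Lemma ispoly_sum (I : eqType) (s : seq I) (P : pred I) (f : I -> F -> F) :
  (forall i, ispoly (f i)) -> ispoly (fun t => \sum_(i <- s | P i) f i t).
Proof.
move=> H; elim: s => [|i s IH].
  by apply: (ispoly_ext _ (ispoly_const 0)) => t; rewrite big_nil.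
case Pi: (P i).
  apply: (ispoly_ext _ (ispoly_add (H i) IH)) => t; rewrite big_cons Pi //.
by apply: (ispoly_ext _ IH) => t; rewrite big_cons Pi.
Qed.

Lemma ispoly_sum' (I : finType) (f : I -> F -> F) :
  (forall i, ispoly (f i)) -> ispoly (fun t => \sum_i f i t).
Proof. by move=> H; apply: (ispoly_sum _ predT H). Qed.

Lemma ispoly_prod (I : finType) (f : I -> F -> F) :
  (forall i, ispoly (f i)) -> ispoly (fun t => \prod_i f i t).
Proof.
move=> H; rewrite /=; elim: (index_enum I) => [|i s IH].
  by apply: (ispoly_ext _ (ispoly_const 1)) => t; rewrite big_nil.
by apply: (ispoly_ext _ (ispoly_mul (H i) IH)) => t; rewrite big_cons.
Qed.

Definition ispolymx r s (M : F -> 'M[F]_(r, s)) := forall i j, ispoly (fun t => M t i j).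

Lemma ispolymx_mul r s u (A : F -> 'M[F]_(r, s)) (B : F -> 'M[F]_(s, u)) :
  ispolymx A -> ispolymx B -> ispolymx (fun t => A t *m B t).
Proof.
move=> HA HB i j; apply: (ispoly_ext (f := fun t => \sum_k A t i k * B t k j)).
  by move=> t; rewrite mxE.
by apply: ispoly_sum' => k; apply: ispoly_mul.
Qed.

Lemma ispolymx_pow n (A : F -> 'M[F]_n) k :
  ispolymx A -> ispolymx (fun t => A t ^+ k).
Proof.
move=> HA; elim: k => [|k IH].
  by move=> i j; apply: (ispoly_ext _ (ispoly_const ((1%:M : 'M[F]_n) i j))) => t.
move=> i j; apply: (ispoly_ext _ (ispolymx_mul IH HA i j)) => t.
by rewrite exprSr mulmxE.
Qed.

Lemma ispoly_det n (A : F -> 'M[F]_n) : ispolymx A -> ispoly (fun t => \det (A t)).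
Proof.
move=> HA; apply: ispoly_sum' => s; apply: ispoly_mul; first exact: ispoly_const.
by apply: ispoly_prod => i; apply: HA.
Qed.

Lemma ispolymx_const r s (M : 'M[F]_(r, s)) : ispolymx (fun _ => M).
Proof. by move=> i j; apply: ispoly_const. Qed.

Lemma ispolymx_lin r s (M D : 'M[F]_(r, s)) : ispolymx (fun t => M + t *: D).
Proof.
move=> i j; apply: (ispoly_ext _ (ispoly_lin (M i j) (D i j))) => t.
by rewrite !mxE.
Qed.

Lemma ispolymx_tr r s (M : F -> 'M[F]_(r, s)) : ispolymx M -> ispolymx (fun t => (M t)^T).
Proof. by move=> H i j; apply: (ispoly_ext _ (H j i)) => t; rewrite mxE. Qed.

Lemma ispoly_vanish g d t0 : ispoly g -> ispoly d -> d t0 != 0 ->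
  (forall t, d t != 0 -> g t = 0) -> forall t, g t = 0.
Proof.
move=> [pg Hg] [pd Hd] dt0 H.
have pd0 : pd != 0 by apply: contraNneq dt0 => e; rewrite Hd e horner0.
set q := pg * pd.
have qall : forall t, q.[t] = 0.
  move=> t; rewrite hornerM -Hg -Hd; case: (eqVneq (d t) 0) => [->|nz].
    by rewrite mulr0.
  by rewrite H // mul0r.
have q0 : q = 0.
  apply/eqP; apply/negP => /negP nq.
  have : (size [seq (i%:R : F) | i <- iota 0 (size q)] < size q)%N.
    apply: max_poly_roots nq _ _.
      by apply/allP => z _; apply/rootP; apply: qall.
    rewrite map_inj_uniq ?iota_uniq // => i j /eqP; rewrite eqr_nat => /eqP //.
  by rewrite size_map size_iota ltnn.
move=> t; rewrite Hg; move/eqP: q0; rewrite mulf_eq0 (negPf pd0) orbF => /eqP ->.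
by rewrite horner0.
Qed.

End PolyT.


Section Main.
Variable F : numClosedFieldType.
Variables N M1 M2 : nat.

Lemma open_Jt0 (y : qdata F N M1 M2) : Mpoint y -> open_cond y -> qJt y = 0.
Proof. by move=> [[_ m2] _] op; apply: (lemA m2); exact: op. Qed.

Lemma closure_Jt0 (x : qdata F N M1 M2) : in_closureM (fun y => open_cond y) x -> qJt x = 0.
Proof.
move=> H; apply: (H (fun y => qJt y = 0)).
- by move=> y g h _ _ _ /= e; rewrite e mul0mx.
- exists (fun f => exists j : 'I_M2, f = fun y => qJt y 0 j); split.
    by move=> f [j ->]; exact: pf_Jt.
  move=> y _; split.
    by move=> e f [j ->]; rewrite e mxE.
  move=> Hf; apply/matrixP => i j; rewrite ord1 mxE; apply: (Hf (fun y => qJt y 0 j)); by exists j.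
- by move=> y My Oy; exact: open_Jt0.
Qed.

Lemma Jt0_closure (x : qdata F N M1 M2) : Mpoint x -> qJt x = 0 ->
  in_closureM (fun y => open_cond y) x.
Proof.
move=> Mx Jt0 Z _ [P [PP PZ]] HZ.
have [b [v [cb cy]]] := lemC (qXt x)^T.
pose B0 := b^T; pose v0 := v^T.
pose y t := QData (qX x) (qY x) (qI x) (qJ x) (qXt x) (qYt x + t *: (B0 - qYt x))
   (qIt x + t *: (v0 - qIt x)) (qJt x) (qS x).
pose d t := \det (krylov M2 (qIt (y t))^T (qYt (y t))^T).
have dpoly : ispoly d.
  apply: ispoly_det => i j.
  apply: (ispoly_ext (f := fun t => ((qIt (y t))^T *m (qYt (y t))^T ^+ i) 0 j)).
    by move=> t; rewrite /krylov [RHS]mxE.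
  apply: ispolymx_mul; first exact/ispolymx_tr/ispolymx_lin.
  exact/ispolymx_pow/ispolymx_tr/ispolymx_lin.
have y1Y : qYt (y 1) = B0 by rewrite /= scale1r addrC subrK.
have y1I : qIt (y 1) = v0 by rewrite /= scale1r addrC subrK.
have d1 : d 1 != 0.
  rewrite /d y1Y y1I /B0 /v0 !trmxK -unitfE -unitmxE -row_full_unit.
  exact: cyc_krylov.
have [[m1 m2] [s1 s2]] := Mx.
have c1 : qXt x *m qYt x = qYt x *m qXt x.
  by apply/eqP; rewrite -subr_eq0; move: m2; rewrite Jt0 mulmx0 addr0 => ->.
have c2 : qXt x *m B0 = B0 *m qXt x.
  by rewrite /B0 -[qXt x]trmxK -!trmx_mul cb.
have MO : forall t, d t != 0 -> Mpoint (y t) /\ open_cond (y t).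
  move=> t dt; split.
  - have fK : row_full (krylov M2 (qIt (y t))^T (qYt (y t))^T).
      by rewrite row_full_unit unitmxE unitfE.
    split; split => //.
    + rewrite /= Jt0 mulmx0 addr0.
      have -> : qXt x *m (qYt x + t *: (B0 - qYt x)) =
                (qYt x + t *: (B0 - qYt x)) *m qXt x.
        by rewrite mulmxDr mulmxDl -scalemxAr -scalemxAl mulmxBr mulmxBl c1 c2.
      by rewrite subrr.
    + move=> W IW _ YW; apply: (full_from_sub fK); apply: krylov_sub YW.
      by move: IW; rewrite /= tr_row_mx col_mx_sub => /andP [].
  - move=> W IW _ YW; apply: (full_from_sub _ (krylov_sub M2 IW YW)).
    by rewrite row_full_unit unitmxE unitfE.
have vanish : forall f, P f -> f x = 0.
  move=> f Pf.
  have gpoly : ispoly (fun t => f (y t)).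
    elim: (PP f Pf) => [c|i j|i j|i j|i j|i j|i j|i j|i j|i j|f1 f2 _ H1 _ H2|f1 f2 _ H1 _ H2].
    all: try exact: ispoly_const.
    - exact: ispolymx_lin.
    - exact: ispolymx_lin.
    - exact: ispoly_add.
    - exact: ispoly_mul.
  have := ispoly_vanish gpoly dpoly d1.
  have y0 : y 0 = x by rewrite /y !scale0r !addr0; case: (x).
  move=> /(_ _ 0); rewrite y0; apply => t dt.
  have [My Oy] := MO t dt.
  by have := HZ _ My Oy; move/(PZ (y t) My) => H; apply: H.
by apply/(PZ x Mx).
Qed.

End Main.

Unset Implicit Arguments.
Theorem proposition3 (R : realType) (N M1 M2 : nat) (x : qdata R[i] N M1 M2) :
  Mpoint x ->
  (qJt x = 0 <-> in_closureM (fun y => open_cond y) x).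
Proof.
move=> Mx; split; first exact: Jt0_closure.
exact: closure_Jt0.
Qed.
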